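(* Let $N\subset Q^4$ be a null line containing a real point $[p\wedge pj]$. Then $N$ corresponds to a set of two-spheres in $\mathbb{HP}^1$ mutually touching at $p\mathbb{H}$: every non-real point of $N$ is a two-sphere through $p\mathbb{H}$, any two of them touch at $p\mathbb{H}$, and for any two-sphere $\sigma\in N$ the set of two-spheres touching $\sigma$ at $p\mathbb{H}$, together with the point $[p\wedge pj]$, is $N$.
   Context: $\mathbb{H}$ denotes the quaternions, $\mathbb{C}=\mathrm{span}_{\mathbb{R}}\{1,i\}$; $\mathbb{H}^2$ is a right $\mathbb{H}$-vector space identified with $\mathbb{C}^4$; $\mathbb{HP}^1=\{v\mathbb{H}\}\cong S^4$; the twistor fibre over $v\mathbb{H}$ is the line of $\mathbb{CP}^3=\mathbb{P}(\mathbb{C}^4)$ through $[v],[vj]$. $Q^4=\{[\alpha]\in\mathbb{P}(\Lambda^2\mathbb{C}^4):\alpha\wedge\alpha=0\}$, $[v\wedge w]$ identified with the line through $[v],[w]$. The antilinear extension of $v\wedge w\mapsto vj\wedge wj$ gives a real structure $j$ on $Q^4$ whose real points are the twistor fibres $[v\wedge vj]$; every non-real point is the twistor lift $\mathbb{P}\{v:(\sigma)v=vi\}$ of a round two-sphere $\sigma=\{l:(\sigma)l=l\}$ with conformal structure, $(\sigma)\in\mathrm{End}_{\mathbb{H}}(\mathbb{H}^2)$, $(\sigma)^2=-1$. A null line is a projective line contained in $Q^4$. Two two-spheres $\sigma,\sigma'$ through $p\mathbb{H}$ touch at $p\mathbb{H}$ if, for some basis $\{p,e_2\}$ of $\mathbb{H}^2$,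 the matrices of $(\sigma),(\sigma')$ are $\begin{pmatrix}R&H\\0&N\end{pmatrix}$, $\begin{pmatrix}R&H'\\0&N\end{pmatrix}$ with the same $R,N$ (parallel planes with the same conformal structure in the chart with $p\mathbb{H}=\infty$). *)

(* Defs.v *)
(* Model: H^2 = C^4 (column vectors), right multiplication
   by j is the antilinear map Jv below, right mult. by complex scalars is
   scalar multiplication. Lambda^2 C^4 = skew-symmetric 4x4 matrices. *)
From HB Require Import structures.
From mathcomp Require Import all_boot all_order all_algebra.
Set Implicit Arguments. Unset Strict Implicit. Unset Printing Implicit Defensive.
Import Order.TTheory GRing.Theory Num.Theory.
Local Open Scope ring_scope.

Section Twistor.
Variable C : numClosedFieldType.

Definition vec := 'cV[C]_4.

(* matrix of the antilinear map v |-> v j : (z1,z2,z3,z4) |-> (-conj z2, conj z1, -conj z4, conj z3) *)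
Definition Jmx : 'M[C]_4 :=
  \matrix_(i < 4, k < 4)
    (if (val i == 0%N) && (val k == 1%N) then -1
     else if (val i == 1%N) && (val k == 0%N) then 1
     else if (val i == 2%N) && (val k == 3%N) then -1
     else if (val i == 3%N) && (val k == 2%N) then 1 else 0).

Definition Jv (v : vec) : vec := Jmx *m map_mx Num.conj v.

(* quaternions q = a + b j, a b in C *)
Definition quat := (C * C)%type.
Definition qi : quat := ('i, 0).

Definition rmul (v : vec) (q : quat) : vec := q.1 *: v + Jv (q.2 *: v).

Definition hline (v : vec) : vec -> Prop := fun x => exists q, x = rmul v q.

Definition hlinear (S : 'M[C]_4) : Prop :=
  forall v q, S *m rmul v q = rmul (S *m v) q.

(* round two-sphere with conformal structure, given by (sigma) *)
Definition sphere (S : 'M[C]_4) : Prop := hlinear S /\ S *m S = - 1%:M.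

Definition through (S : 'M[C]_4) (p : vec) : Prop :=
  forall x, hline p x <-> (exists y, hline p y /\ x = S *m y).

Definition hbasis (p e : vec) : Prop :=
  forall x, exists! qq : quat * quat, x = rmul p qq.1 + rmul e qq.2.

Definition touches (S S' : 'M[C]_4) (p : vec) : Prop :=
  exists e, hbasis p e /\ exists R N H H' : quat,
    [/\ S *m p = rmul p R, S *m e = rmul p H + rmul e N,
        S' *m p = rmul p R & S' *m e = rmul p H' + rmul e N].

Definition skew (a : 'M[C]_4) : Prop := a^T = - a.
Definition wedge (v w : vec) : 'M[C]_4 := v *m w^T - w *m v^T.
(* alpha /\ alpha = 2 Pf(alpha) e1234 *)
Definition pf (a : 'M[C]_4) : C :=
  a 0 1 * a 2%:R 3%:R - a 0 2%:R * a 1 3%:R + a 0 3%:R * a 1 2%:R.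

Definition proj_eq (a b : 'M[C]_4) : Prop :=
  a != 0 /\ exists c : C, c != 0 /\ a = c *: b.

(* real structure j: antilinear extension of v/\w |-> vj /\ wj *)
Definition realstr (a : 'M[C]_4) : 'M[C]_4 := Jmx *m map_mx Num.conj a *m Jmx^T.
Definition is_real_pt (a : 'M[C]_4) : Prop := proj_eq (realstr a) a.

(* the projective line N through [a],[b] is a null line *)
Definition null_line (a b : 'M[C]_4) : Prop :=
  [/\ skew a, skew b,
      (forall x y : C, x *: a + y *: b = 0 -> x = 0 /\ y = 0)
    & forall x y : C, pf (x *: a + y *: b) = 0].

Definition onN (a b g : 'M[C]_4) : Prop :=
  g != 0 /\ exists x y : C, g = x *: a + y *: b.

(* [g] is the twistor twlift P{v : (sigma) v = v i} of sigma *)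
Definition twlift (S : 'M[C]_4) (g : 'M[C]_4) : Prop :=
  exists v w : vec,
    [/\ (forall x y : C, x *: v + y *: w = 0 -> x = 0 /\ y = 0),
        (forall u, S *m u = rmul u qi <-> exists x y : C, u = x *: v + y *: w)
      & proj_eq g (wedge v w)].

End Twistor.

(* Main.v *)
Require Import Defs.
From HB Require Import structures.
From mathcomp Require Import all_boot all_order all_algebra ring.
Set Implicit Arguments. Unset Strict Implicit. Unset Printing Implicit Defensive.
Import Order.TTheory GRing.Theory Num.Theory.
Local Open Scope ring_scope.

Section A.
Variable C : numClosedFieldType.
Local Notation vec := 'cV[C]_4.
Local Notation J := (@Jv C).

Lemma ord4_cases (P : 'I_4 -> Prop) : P 0 -> P 1 -> P 2%:R -> P 3%:R -> forall i, P i.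
Proof.
move=> H0 H1 H2 H3 [[|[|[|[|i]]]] Hi] //.
- by have -> : Ordinal Hi = 0 by apply/val_inj.
- by have -> : Ordinal Hi = 1 by apply/val_inj.
- by have -> : Ordinal Hi = 2%:R by apply/val_inj.
- by have -> : Ordinal Hi = 3%:R by apply/val_inj.
Qed.

Definition tbl (l : seq (seq C)) (i j : nat) : C := nth 0 (nth [::] l i) j.
Definition cv4 (x0 x1 x2 x3 : C) : vec := \matrix_(i < 4, j < 1) nth 0 [:: x0; x1; x2; x3] i.
Definition skw (a b c d e f : C) : 'M[C]_4 := \matrix_(i < 4, j < 4)
  tbl [:: [:: 0; a; b; c]; [:: -a; 0; d; e]; [:: -b; -d; 0; f]; [:: -c; -e; -f; 0]] i j.

Lemma wedgeE (v w : vec) i j : wedge v w i j = v i 0 * w j 0 - w i 0 * v j 0.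
Proof. by rewrite !mxE !big_ord1 !mxE. Qed.

Lemma conjJmx : map_mx Num.conj (Jmx C) = Jmx C.
Proof.
apply/matrixP=> i k; rewrite !mxE.
by case: ifP => _; [rewrite conjCN1|case: ifP => _; [rewrite conjC1|case: ifP => _; [rewrite conjCN1|case: ifP=> _; [rewrite conjC1|rewrite conjC0]]]].
Qed.

Lemma JmxJmx : Jmx C *m Jmx C = - 1%:M.
Proof.
apply/matrixP=> i k; rewrite !mxE !big_ord_recr big_ord0 /= !mxE.
by case: i => [[|[|[|[|?]]]] ?] //; case: k => [[|[|[|[|?]]]] ?] //=; ring.
Qed.

Lemma JvD u v : J (u + v) = J u + J v.
Proof. by rewrite /Jv map_mxD mulmxDr. Qed.
Lemma JvZ c v : J (c *: v) = c^* *: J v.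
Proof. by rewrite /Jv map_mxZ scalemxAr. Qed.
Lemma JvN v : J (- v) = - J v.
Proof. by rewrite /Jv map_mxN mulmxN. Qed.
Lemma JvB u v : J (u - v) = J u - J v.
Proof. by rewrite JvD JvN. Qed.
Lemma Jv0 : J 0 = 0.
Proof. by rewrite /Jv map_mx0 mulmx0. Qed.
Lemma JvK v : J (J v) = - v.
Proof.
rewrite /Jv map_mxM conjJmx mulmxA JmxJmx mulNmx mul1mx.
congr (- _); apply/matrixP=> i j; rewrite !mxE; exact: conjCK.
Qed.

Lemma skew_diag (g : 'M[C]_4) (i : 'I_4) : Defs.skew g -> g i i = 0.
Proof.
move=> /matrixP /(_ i i); rewrite !mxE => /eqP; rewrite -subr_eq0 opprK -mulr2n.
by rewrite mulrn_eq0 /= => /eqP.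
Qed.

Lemma skew_sym (g : 'M[C]_4) (i j : 'I_4) : Defs.skew g -> g j i = - g i j.
Proof. by move=> /matrixP /(_ i j); rewrite !mxE. Qed.

Lemma skewE g : Defs.skew g ->
  g = skw (g 0 1) (g 0 2%:R) (g 0 3%:R) (g 1 2%:R) (g 1 3%:R) (g 2%:R 3%:R).
Proof.
move=> Hg; apply/matrixP=> i j.
elim/ord4_cases: i; elim/ord4_cases: j;
  rewrite !mxE /tbl /= ?skew_diag //; rewrite (skew_sym _ _ Hg) //.
Qed.

End A.

Section B.
Variable C : numClosedFieldType.
Local Notation vec := 'cV[C]_4.
Local Notation J := (@Jv C).

Ltac entries := apply/matrixP; apply: ord4_cases; apply: ord4_cases;
  rewrite !wedgeE !mxE /tbl /=.


Lemma dec_a (a b c d e f : C) : a * f - b * e + c * d = 0 -> a != 0 ->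
  skw a b c d e f = wedge (a^-1 *: cv4 0 (-a) (-b) (-c)) (cv4 a 0 (-d) (-e)).
Proof.
move=> H Hx.
have Ht : a * f = b * e - c * d .
  have : a * f - (b * e - c * d) = 1 * (a * f - b * e + c * d) by ring.
  by rewrite H mulr0 => /eqP; rewrite subr_eq0 => /eqP.
have -> : f = (b * e - c * d) / a by rewrite -Ht [a * f]mulrC mulfK.
by entries; field.
Qed.

Lemma dec_b (a b c d e f : C) : a * f - b * e + c * d = 0 -> b != 0 ->
  skw a b c d e f = wedge (b^-1 *: cv4 0 (-a) (-b) (-c)) (cv4 b d 0 (-f)).
Proof.
move=> H Hx.
have Ht : b * e = a * f + c * d .
  have : b * e - (a * f + c * d) = -1 * (a * f - b * e + c * d) by ring.
  by rewrite H mulr0 => /eqP; rewrite subr_eq0 => /eqP.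
have -> : e = (a * f + c * d) / b by rewrite -Ht [b * e]mulrC mulfK.
by entries; field.
Qed.

Lemma dec_c (a b c d e f : C) : a * f - b * e + c * d = 0 -> c != 0 ->
  skw a b c d e f = wedge (c^-1 *: cv4 0 (-a) (-b) (-c)) (cv4 c e f 0).
Proof.
move=> H Hx.
have Ht : c * d = b * e - a * f .
  have : c * d - (b * e - a * f) = 1 * (a * f - b * e + c * d) by ring.
  by rewrite H mulr0 => /eqP; rewrite subr_eq0 => /eqP.
have -> : d = (b * e - a * f) / c by rewrite -Ht [c * d]mulrC mulfK.
by entries; field.
Qed.

Lemma dec_d (a b c d e f : C) : a * f - b * e + c * d = 0 -> d != 0 ->
  skw a b c d e f = wedge (d^-1 *: cv4 a 0 (-d) (-e)) (cv4 b d 0 (-f)).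
Proof.
move=> H Hx.
have Ht : d * c = b * e - a * f .
  have : d * c - (b * e - a * f) = 1 * (a * f - b * e + c * d) by ring.
  by rewrite H mulr0 => /eqP; rewrite subr_eq0 => /eqP.
have -> : c = (b * e - a * f) / d by rewrite -Ht [d * c]mulrC mulfK.
by entries; field.
Qed.

Lemma dec_e (a b c d e f : C) : a * f - b * e + c * d = 0 -> e != 0 ->
  skw a b c d e f = wedge (e^-1 *: cv4 a 0 (-d) (-e)) (cv4 c e f 0).
Proof.
move=> H Hx.
have Ht : e * b = a * f + c * d .
  have : e * b - (a * f + c * d) = -1 * (a * f - b * e + c * d) by ring.
  by rewrite H mulr0 => /eqP; rewrite subr_eq0 => /eqP.
have -> : b = (a * f + c * d) / e by rewrite -Ht [e * b]mulrC mulfK.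
by entries; field.
Qed.

Lemma dec_f (a b c d e f : C) : a * f - b * e + c * d = 0 -> f != 0 ->
  skw a b c d e f = wedge (f^-1 *: cv4 b d 0 (-f)) (cv4 c e f 0).
Proof.
move=> H Hx.
have Ht : f * a = b * e - c * d .
  have : f * a - (b * e - c * d) = 1 * (a * f - b * e + c * d) by ring.
  by rewrite H mulr0 => /eqP; rewrite subr_eq0 => /eqP.
have -> : a = (b * e - c * d) / f by rewrite -Ht [f * a]mulrC mulfK.
by entries; field.
Qed.

Lemma decomp (g : 'M[C]_4) : Defs.skew g -> pf g = 0 -> g != 0 ->
  exists v w : vec, g = wedge v w.
Proof.
move=> Hs; rewrite (skewE Hs) /pf !mxE /tbl /=.
set a := g 0 1; set b := g 0 2%:R; set c := g 0 3%:R; set d := g 1 2%:R;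
  set e := g 1 3%:R; set f := g 2%:R 3%:R => H Hnz.
have H' : a * f - b * e + c * d = 0 by rewrite -H; ring.
have [Ha|Ha] := eqVneq a 0; last by eexists; eexists; exact: dec_a.
have [Hb|Hb] := eqVneq b 0; last by eexists; eexists; exact: dec_b.
have [Hc|Hc] := eqVneq c 0; last by eexists; eexists; exact: dec_c.
have [Hd|Hd] := eqVneq d 0; last by eexists; eexists; exact: dec_d.
have [He|He] := eqVneq e 0; last by eexists; eexists; exact: dec_e.
have [Hf|Hf] := eqVneq f 0; last by eexists; eexists; exact: dec_f.
exfalso; move/eqP: Hnz; apply; rewrite Ha Hb Hc Hd He Hf.
apply/matrixP; apply: ord4_cases; apply: ord4_cases; by rewrite !mxE /tbl /= ?oppr0.
Qed.
End B.

Section C.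
Variable C : numClosedFieldType.
Local Notation vec := 'cV[C]_4.
Local Notation J := (@Jv C).

Lemma det4 (a00 a01 a02 a03 a10 a11 a12 a13 a20 a21 a22 a23 a30 a31 a32 a33 : C) :
  \det (\matrix_(i < 4, j < 4) tbl [:: [:: a00; a01; a02; a03]; [:: a10; a11; a12; a13];
     [:: a20; a21; a22; a23]; [:: a30; a31; a32; a33]] i j) =
  a00 * (a11 * (a22 * a33 - a23 * a32) - a12 * (a21 * a33 - a23 * a31) + a13 * (a21 * a32 - a22 * a31))
- a01 * (a10 * (a22 * a33 - a23 * a32) - a12 * (a20 * a33 - a23 * a30) + a13 * (a20 * a32 - a22 * a30))
+ a02 * (a10 * (a21 * a33 - a23 * a31) - a11 * (a20 * a33 - a23 * a30) + a13 * (a20 * a31 - a21 * a30))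
- a03 * (a10 * (a21 * a32 - a22 * a31) - a11 * (a20 * a32 - a22 * a30) + a12 * (a20 * a31 - a21 * a30)).
Proof.
rewrite (expand_det_row _ ord0) /cofactor !big_ord_recl big_ord0 !(@expand_det_row _ 3 _ ord0) /cofactor !big_ord_recl !big_ord0 !(@expand_det_row _ 2 _ ord0) /cofactor !big_ord_recl !big_ord0 !det_mx11 !mxE /=.
rewrite /tbl /=.
ring.
Qed.

Lemma sum4 (F : 'I_4 -> C) : \sum_i F i = F 0 + F 1 + F 2%:R + F 3%:R.
Proof.
rewrite !big_ord_recr big_ord0 /= add0r.
by congr (_ + _ + _ + _); congr F; apply/val_inj.
Qed.

Definition colmx (a1 a2 a3 a4 : vec) : 'M[C]_4 :=
  \matrix_(i < 4, k < 4) nth 0 [:: a1 i 0; a2 i 0; a3 i 0; a4 i 0] k.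

Lemma colmx_mul a1 a2 a3 a4 (c : vec) : colmx a1 a2 a3 a4 *m c =
  c 0 0 *: a1 + c 1 0 *: a2 + c 2%:R 0 *: a3 + c 3%:R 0 *: a4.
Proof.
apply/matrixP=> i j; rewrite (ord1 j) !mxE sum4 !mxE /=; ring.
Qed.

Definition Bform (a b : 'M[C]_4) : C :=
  a 0 1 * b 2%:R 3%:R + b 0 1 * a 2%:R 3%:R - a 0 2%:R * b 1 3%:R - b 0 2%:R * a 1 3%:R
  + a 0 3%:R * b 1 2%:R + b 0 3%:R * a 1 2%:R.

Lemma pfD (a b : 'M[C]_4) : pf (a + b) = pf a + pf b + Bform a b.
Proof. rewrite /pf /Bform !mxE; ring. Qed.

Lemma det_colmx a1 a2 a3 a4 :
  \det (colmx a1 a2 a3 a4) = Bform (wedge a1 a2) (wedge a3 a4).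
Proof.
have -> : colmx a1 a2 a3 a4 = \matrix_(i < 4, j < 4) tbl
  [:: [:: a1 0 0; a2 0 0; a3 0 0; a4 0 0]; [:: a1 1 0; a2 1 0; a3 1 0; a4 1 0];
      [:: a1 2%:R 0; a2 2%:R 0; a3 2%:R 0; a4 2%:R 0]; [:: a1 3%:R 0; a2 3%:R 0; a3 3%:R 0; a4 3%:R 0]] i j.
  apply/matrixP; apply: ord4_cases; apply: ord4_cases; by rewrite !mxE /tbl.
rewrite det4 /Bform !wedgeE; ring.
Qed.

Lemma kern4 (a1 a2 a3 a4 : vec) : Bform (wedge a1 a2) (wedge a3 a4) = 0 ->
  exists m1 m2 m3 m4 : C, ~~ [&& m1 == 0, m2 == 0, m3 == 0 & m4 == 0] /\
    m1 *: a1 + m2 *: a2 + m3 *: a3 + m4 *: a4 = 0.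
Proof.
rewrite -det_colmx -det_tr => /eqP /det0P [v vnz Hv].
exists (v 0 0), (v 0 1), (v 0 2%:R), (v 0 3%:R); split.
  apply: contra vnz => /and4P [/eqP H0 /eqP H1 /eqP H2 /eqP H3].
  apply/eqP/matrixP=> i; apply: ord4_cases; by rewrite (ord1 i) mxE.
have := congr1 trmx Hv; rewrite trmx_mul trmxK trmx0 colmx_mul !mxE.
done.
Qed.

Lemma colmx_unit a1 a2 a3 a4 :
  (forall m1 m2 m3 m4 : C, m1 *: a1 + m2 *: a2 + m3 *: a3 + m4 *: a4 = 0 ->
     [/\ m1 = 0, m2 = 0, m3 = 0 & m4 = 0]) ->
  colmx a1 a2 a3 a4 \in unitmx.
Proof.
move=> Hind; rewrite unitmxE unitfE -det_tr; apply/negP => /det0P [v vnz Hv].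
have := congr1 trmx Hv; rewrite trmx_mul trmxK trmx0 colmx_mul !mxE.
move/Hind => [H0 H1 H2 H3]; move/eqP: vnz; apply.
apply/matrixP=> i; apply: ord4_cases; by rewrite (ord1 i) !mxE.
Qed.

End C.

Ltac vring := apply/matrixP=> ? ?; rewrite !mxE; ring.

Section D.
Variable C : numClosedFieldType.
Local Notation vec := 'cV[C]_4.
Local Notation J := (@Jv C).

Ltac wring := apply/matrixP=> ? ?; rewrite !(wedgeE, mxE); ring.

Lemma wedgeZl c (v w : vec) : wedge (c *: v) w = c *: wedge v w.
Proof. by wring. Qed.
Lemma wedgeZr c (v w : vec) : wedge v (c *: w) = c *: wedge v w.
Proof. by wring. Qed.
Lemma wedgeDl (u v w : vec) : wedge (u + v) w = wedge u w + wedge v w.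
Proof. by wring. Qed.
Lemma wedgeDr (u v w : vec) : wedge u (v + w) = wedge u v + wedge u w.
Proof. by wring. Qed.
Lemma wedgeNl (v w : vec) : wedge (- v) w = - wedge v w.
Proof. by wring. Qed.
Lemma wedgeNr (v w : vec) : wedge v (- w) = - wedge v w.
Proof. by wring. Qed.
Lemma wedgevv (v : vec) : wedge v v = 0.
Proof. by wring. Qed.
Lemma wedgeC (v w : vec) : wedge w v = - wedge v w.
Proof. by wring. Qed.

Lemma N0 (c d : C) : c * c^* + d * d^* = 0 -> c = 0 /\ d = 0.
Proof.
move/eqP; rewrite paddr_eq0 ?mul_conjC_ge0 // !mul_conjC_eq0.
by case/andP => /eqP -> /eqP ->.
Qed.

Lemma N0' (c d : C) : (c != 0) || (d != 0) -> c * c^* + d * d^* != 0.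
Proof.
move=> H; apply/eqP => /N0 [Hc Hd]; move: H; by rewrite Hc Hd eqxx.
Qed.

Lemma nz_entry (x : vec) : x != 0 -> exists i, x i 0 != 0.
Proof.
move=> Hx; apply/existsP; apply: contraR Hx; rewrite negb_exists => /forallP H.
apply/eqP/matrixP=> i j; rewrite (ord1 j) mxE; by move: (H i); rewrite negbK => /eqP.
Qed.

Lemma nz_entry2 (g : 'M[C]_4) : g != 0 -> exists i j, g i j != 0.
Proof.
move=> Hg; case: (boolP [exists i, exists j, g i j != 0]).
  by move/existsP=> [i /existsP [j H]]; exists i, j.
rewrite negb_exists => /forallP H; case/eqP: Hg; apply/matrixP=> i j; rewrite mxE.
by move: (H i); rewrite negb_exists => /forallP /(_ j); rewrite negbK => /eqP.
Qed.

Lemma rmulE (v : vec) (q : quat C) : rmul v q = q.1 *: v + (q.2)^* *: J v.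
Proof. by rewrite /rmul JvZ. Qed.

Lemma hlinJ (S : 'M[C]_4) v : hlinear S -> S *m J v = J (S *m v).
Proof.
move=> H; have := H v (0, 1); rewrite !rmulE /= conjC1 !scale0r !add0r !scale1r.
by [].
Qed.

Lemma hlin_of (S : 'M[C]_4) : (forall v, S *m J v = J (S *m v)) -> hlinear S.
Proof.
move=> H v q; rewrite !rmulE mulmxDr -!scalemxAr H; done.
Qed.

Lemma I1 (x : vec) m1 m2 : x != 0 -> m1 *: x + m2 *: J x = 0 -> m1 = 0 /\ m2 = 0.
Proof.
move=> Hx H; have HJ := congr1 J H; rewrite JvD !JvZ JvK Jv0 in HJ.
have : (m1 * m1^* + m2 * m2^*) *: x = 0.
  rewrite (_ : _ *: x = m1^* *: (m1 *: x + m2 *: J x) - m2 *: (m1^* *: J x + m2^* *: - x)).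
    by rewrite H HJ !scaler0 subr0.
  by vring.
by move/eqP; rewrite scaler_eq0 (negbTE Hx) orbF => /eqP H'; exact: N0 H'.
Qed.

Lemma I2 (x y : vec) m1 m2 m3 m4 : x != 0 -> ~~ [&& m1 == 0, m2 == 0, m3 == 0 & m4 == 0] ->
  m1 *: x + m2 *: J x + m3 *: y + m4 *: J y = 0 -> exists a b, y = a *: x + b *: J x.
Proof.
move=> Hx Hm H.
have [H34|H34] := eqVneq (m3 * m3^* + m4 * m4^*) 0.
  have [H3 H4] := N0 H34; rewrite H3 H4 !scale0r !addr0 in H.
  by move/(I1 Hx): H => [H1 H2]; move: Hm; rewrite H1 H2 H3 H4 eqxx.
have HJ := congr1 J H; rewrite !JvD !JvZ !JvK Jv0 in HJ.
exists (- (m3^* * m1 + m4 * m2^*) / (m3 * m3^* + m4 * m4^*)).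
exists (- (m3^* * m2 - m4 * m1^*) / (m3 * m3^* + m4 * m4^*)).
apply: (@scalerI _ _ (m3 * m3^* + m4 * m4^*)) => //.
apply/subr0_eq.
rewrite (_ : _ - _ = m3^* *: (m1 *: x + m2 *: J x + m3 *: y + m4 *: J y)
   - m4 *: (m1^* *: J x + m2^* *: - x + m3^* *: J y + m4^* *: - y)).
  by rewrite H HJ !scaler0 subr0.
apply/matrixP=> ? ?; rewrite !mxE; field; exact: H34.
Qed.

Lemma wedge_nz (x z : vec) : (forall a b, a *: x + b *: z = 0 -> a = 0 /\ b = 0) -> wedge x z != 0.
Proof.
move=> Hind; apply/eqP => H0.
have [Hx|Hx] := eqVneq x 0.
  have [H1 _] : (1 : C) = 0 /\ (0 : C) = 0 by apply: Hind; rewrite Hx scaler0 scale0r addr0.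
  by move/eqP: H1; rewrite oner_eq0.
have [i Hi] := nz_entry Hx.
have [_ Hb] : z i 0 = 0 /\ - x i 0 = 0.
  apply: Hind; apply/matrixP=> k l; rewrite (ord1 l); move/matrixP: H0 => /(_ k i).
  rewrite wedgeE !mxE => H; rewrite -H; ring.
by move/eqP: Hi; apply; rewrite -[x i 0]opprK Hb oppr0.
Qed.

Lemma span_wedge (x z v w : vec) : wedge x z = wedge v w -> wedge x z != 0 ->
  exists a b, x = a *: v + b *: w.
Proof.
move=> H Hnz; have [j [j' Hjj]] := nz_entry2 Hnz.
have Hab : forall a b, x a 0 * z b 0 - z a 0 * x b 0 = v a 0 * w b 0 - w a 0 * v b 0.
  by move=> a b; move/matrixP: H => /(_ a b); rewrite !wedgeE.
rewrite wedgeE Hab in Hjj.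
set G := v j 0 * w j' 0 - w j 0 * v j' 0 in Hjj.
exists ((x j 0 * w j' 0 - x j' 0 * w j 0) / G), ((x j' 0 * v j 0 - x j 0 * v j' 0) / G).
apply/matrixP=> i l; rewrite (ord1 l) !mxE.
have key : x i 0 * G = (x j 0 * w j' 0 - x j' 0 * w j 0) * v i 0 + (x j' 0 * v j 0 - x j 0 * v j' 0) * w i 0.
  rewrite /G -Hab.
  transitivity (x j 0 * (x i 0 * z j' 0 - z i 0 * x j' 0) - x j' 0 * (x i 0 * z j 0 - z i 0 * x j 0)).
    by ring.
  rewrite !Hab; ring.
rewrite -[LHS](mulfK Hjj) key; field; exact: Hjj.
Qed.

End D.

Section E.
Variable C : numClosedFieldType.
Local Notation vec := 'cV[C]_4.
Local Notation J := (@Jv C).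

Lemma cM (a b : C) : (a * b)^* = a^* * b^*. Proof. exact: rmorphM. Qed.
Lemma cN (a : C) : (- a)^* = - a^*. Proof. exact: rmorphN. Qed.

Definition indep4 (a1 a2 a3 a4 : vec) := forall m1 m2 m3 m4 : C,
  m1 *: a1 + m2 *: a2 + m3 *: a3 + m4 *: a4 = 0 -> [/\ m1 = 0, m2 = 0, m3 = 0 & m4 = 0].

Definition comb (x z : vec) (c0 c1 c2 c3 : C) : vec :=
  c0 *: x + c1 *: J x + c2 *: z + c3 *: J z.

Definition Bm (x z : vec) := colmx x (J x) z (J z).
Definition Dm : 'M[C]_4 := \matrix_(i < 4, j < 4)
  (if i == j then nth 0 [:: 'i; -'i; 'i; -'i] i else 0).
Definition Sph (x z : vec) := Bm x z *m Dm *m invmx (Bm x z).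

Lemma mx_ext (M N : 'M[C]_4) : (forall v : vec, M *m v = N *m v) -> M = N.
Proof.
move=> H; apply/matrixP=> i j; have := congr1 (fun t : vec => t i 0) (H (delta_mx j 0)).
by rewrite -!colE !mxE.
Qed.

Lemma Bm_cv4 x z c0 c1 c2 c3 : Bm x z *m cv4 c0 c1 c2 c3 = comb x z c0 c1 c2 c3.
Proof. by rewrite /Bm colmx_mul !mxE. Qed.

Lemma Dm_cv4 c0 c1 c2 c3 : Dm *m cv4 c0 c1 c2 c3 = cv4 ('i * c0) (- 'i * c1) ('i * c2) (- 'i * c3).
Proof.
apply/matrixP; apply: ord4_cases => j; rewrite (ord1 j) !mxE sum4 !mxE /=; ring.
Qed.

Lemma comb_ex x z (v : vec) : indep4 x (J x) z (J z) ->
  exists c0 c1 c2 c3, v = comb x z c0 c1 c2 c3.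
Proof.
move=> Hind; have HU : Bm x z \in unitmx by apply: colmx_unit.
set c := invmx (Bm x z) *m v.
exists (c 0 0), (c 1 0), (c 2%:R 0), (c 3%:R 0).
by rewrite /comb -[LHS](mulKVmx HU) -/c /Bm colmx_mul.
Qed.

Lemma comb_inj x z c0 c1 c2 c3 d0 d1 d2 d3 : indep4 x (J x) z (J z) ->
  comb x z c0 c1 c2 c3 = comb x z d0 d1 d2 d3 -> [/\ c0 = d0, c1 = d1, c2 = d2 & c3 = d3].
Proof.
move=> Hind H.
have E : (c0 - d0) *: x + (c1 - d1) *: J x + (c2 - d2) *: z + (c3 - d3) *: J z = 0.
  rewrite (_ : _ + _ = comb x z c0 c1 c2 c3 - comb x z d0 d1 d2 d3); first by rewrite H subrr.
  rewrite /comb; vring.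
have [h0 h1 h2 h3] := Hind _ _ _ _ E.
by split; apply/eqP; rewrite -subr_eq0; apply/eqP.
Qed.

Lemma Sph_comb x z c0 c1 c2 c3 : indep4 x (J x) z (J z) ->
  Sph x z *m comb x z c0 c1 c2 c3 = comb x z ('i * c0) (- 'i * c1) ('i * c2) (- 'i * c3).
Proof.
move=> Hind; have HU : Bm x z \in unitmx by apply: colmx_unit.
by rewrite -!Bm_cv4 /Sph -!mulmxA (mulmxA (invmx _)) (mulVmx HU) mul1mx Dm_cv4.
Qed.

Lemma J_comb x z c0 c1 c2 c3 :
  J (comb x z c0 c1 c2 c3) = comb x z (- c1^*) (c0^*) (- c3^*) (c2^*).
Proof. rewrite /comb !JvD !JvZ !JvK; vring. Qed.

Lemma Sph_sphere x z : indep4 x (J x) z (J z) -> sphere (Sph x z).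
Proof.
move=> Hind; split.
  apply: hlin_of => v; have [c0 [c1 [c2 [c3 ->]]]] := comb_ex v Hind.
  rewrite J_comb !Sph_comb // J_comb !cM !cN conjCi.
  congr comb; ring.
apply: mx_ext => v; have [c0 [c1 [c2 [c3 ->]]]] := comb_ex v Hind.
rewrite -mulmxA !Sph_comb // mulNmx mul1mx.
rewrite (_ : - comb x z c0 c1 c2 c3 = comb x z (-c0) (-c1) (-c2) (-c3)); last by rewrite /comb; vring.
by congr comb; rewrite mulrA ?mulrNN -expr2 sqrCi mulN1r.
Qed.

Lemma Sph_eig x z (u : vec) : indep4 x (J x) z (J z) ->
  (Sph x z *m u = rmul u (qi C) <-> exists a b : C, u = a *: x + b *: z).
Proof.
move=> Hind; rewrite rmulE /= conjC0 scale0r addr0; split.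
  have [c0 [c1 [c2 [c3 ->]]]] := comb_ex u Hind.
  rewrite Sph_comb // (_ : 'i *: _ = comb x z ('i * c0) ('i * c1) ('i * c2) ('i * c3)); last by rewrite /comb; vring.
  move/comb_inj => /(_ Hind) [_ H1 _ H3].
  have Hi : 'i != 0 :> C by rewrite -normr_eq0 normCi oner_eq0.
  have h1 : c1 = 0.
    by apply/eqP; move/eqP: H1; rewrite -subr_eq0 -mulrBl mulf_eq0 -opprD oppr_eq0 -mulr2n mulrn_eq0 (negbTE Hi) /=.
  have h3 : c3 = 0.
    by apply/eqP; move/eqP: H3; rewrite -subr_eq0 -mulrBl mulf_eq0 -opprD oppr_eq0 -mulr2n mulrn_eq0 (negbTE Hi) /=.
  by exists c0, c2; rewrite /comb h1 h3 !scale0r !addr0.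
move=> [a [b ->]]; rewrite (_ : a *: x + b *: z = comb x z a 0 b 0); last by rewrite /comb; vring.
rewrite Sph_comb // /comb; vring.
Qed.

Lemma Sph_x x z : indep4 x (J x) z (J z) -> Sph x z *m x = 'i *: x.
Proof.
move=> Hi; have := Sph_comb 1 0 0 0 Hi; rewrite /comb !scale0r !addr0 !scale1r mulr1 => ->.
by rewrite !mulr0 !scale0r !addr0.
Qed.

Lemma Sph_Jx x z : indep4 x (J x) z (J z) -> Sph x z *m J x = - 'i *: J x.
Proof.
move=> Hi; have := Sph_comb 0 1 0 0 Hi; rewrite /comb !scale0r !addr0 add0r !scale1r mulr1 => ->.
by rewrite !mulr0 !scale0r !addr0 add0r.
Qed.

Lemma indep_xz x z : indep4 x (J x) z (J z) ->
  forall a b : C, a *: x + b *: z = 0 -> a = 0 /\ b = 0.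
Proof.
move=> Hind a b H; have [] := Hind a 0 b 0; first by rewrite !scale0r !addr0 H.
by move=> -> _ -> _.
Qed.

Lemma Sph_twlift x z : indep4 x (J x) z (J z) -> twlift (Sph x z) (wedge x z).
Proof.
move=> Hind; exists x, z; split.
- exact: indep_xz.
- by move=> u; apply: Sph_eig.
- split; first exact: wedge_nz (indep_xz Hind).
  by exists 1; rewrite scale1r oner_eq0.
Qed.

Lemma Sph_unique x z (S : 'M[C]_4) : indep4 x (J x) z (J z) -> hlinear S ->
  S *m x = 'i *: x -> S *m z = 'i *: z -> S = Sph x z.
Proof.
move=> Hind Hl Hx Hz; apply: mx_ext => v; have [c0 [c1 [c2 [c3 ->]]]] := comb_ex v Hind.
rewrite Sph_comb // /comb !mulmxDr -!scalemxAr !(hlinJ _ Hl) Hx Hz !JvZ conjCi; vring.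
Qed.

End E.

Section F.
Variable C : numClosedFieldType.
Local Notation vec := 'cV[C]_4.
Local Notation J := (@Jv C).

Lemma null_swap (a b : 'M[C]_4) : null_line a b -> null_line b a.
Proof.
case=> Ha Hb Hi Hp; split => //.
- by move=> x y H; have [] := Hi y x; [rewrite addrC | move=> -> ->].
- by move=> x y; rewrite addrC.
Qed.

Lemma step1 (a b pi : 'M[C]_4) (x0 y0 : C) : null_line a b -> pi = x0 *: a + y0 *: b -> y0 != 0 ->
  [/\ Defs.skew a, pf a = 0, Bform pi a = 0,
      (forall s t : C, s *: pi + t *: a = 0 -> s = 0 /\ t = 0) &
      forall g, (exists s t, g = s *: a + t *: b) <-> (exists s t, g = s *: pi + t *: a)].
Proof.
case=> Ha Hb Hi Hp Hpi Hy0.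
have pfa : pf a = 0 by have := Hp 1 0; rewrite scale1r scale0r addr0.
have pfpi : pf pi = 0 by rewrite Hpi Hp.
split => //.
- have := Hp (x0 + 1) y0; rewrite (_ : _ + _ = pi + a); last by rewrite Hpi scalerDl scale1r; vring.
  by rewrite pfD pfpi pfa !add0r.
- move=> s t; rewrite Hpi => H.
  have [H1 H2] : s * x0 + t = 0 /\ s * y0 = 0.
    by apply: Hi; rewrite -H; vring.
  move/eqP: H2; rewrite mulf_eq0 (negbTE Hy0) orbF => /eqP Hs.
  by split => //; move: H1; rewrite Hs mul0r add0r.
- move=> g; split=> [[s [t ->]]|[s [t ->]]].
    exists (t / y0), (s - t * x0 / y0); rewrite Hpi; apply/matrixP=> ? ?; rewrite !mxE; field.
    exact: Hy0.
  by exists (s * x0 + t), (s * y0); rewrite Hpi; vring.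
Qed.

Lemma step1' (a b pi : 'M[C]_4) (x0 y0 : C) : null_line a b -> pi = x0 *: a + y0 *: b -> pi != 0 ->
  exists c, [/\ Defs.skew c, pf c = 0, Bform pi c = 0,
      (forall s t : C, s *: pi + t *: c = 0 -> s = 0 /\ t = 0) &
      forall g, (exists s t, g = s *: a + t *: b) <-> (exists s t, g = s *: pi + t *: c)].
Proof.
move=> Hn Hpi Hnz; have [Hy0|Hy0] := eqVneq y0 0; last by exists a; apply: step1 Hn Hpi Hy0.
have Hx0 : x0 != 0.
  by apply: contra Hnz => /eqP Hx; rewrite Hpi Hx Hy0 !scale0r addr0.
have [S1 S2 S3 S4 S5] := step1 (null_swap Hn) (etrans Hpi (addrC _ _)) Hx0.
exists b; split => // g; rewrite -S5; split=> [[s [t ->]]|[s [t ->]]]; exists t, s; exact: addrC.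
Qed.


Lemma wedge_ind (u w : vec) : wedge u w != 0 -> forall a b : C, a *: u + b *: w = 0 -> a = 0 /\ b = 0.
Proof.
move=> Hw a b H.
have W0 : wedge 0 w = 0 by apply/matrixP=> ? ?; rewrite wedgeE !mxE; ring.
have W0' : wedge u 0 = 0 by apply/matrixP=> ? ?; rewrite wedgeE !mxE; ring.
split.
  have : wedge (a *: u + b *: w) w = a *: wedge u w by rewrite wedgeDl !wedgeZl wedgevv scaler0 addr0.
  by rewrite H W0 => /esym /eqP; rewrite scaler_eq0 (negbTE Hw) orbF => /eqP.
have : wedge u (a *: u + b *: w) = b *: wedge u w by rewrite wedgeDr !wedgeZr wedgevv scaler0 add0r.
by rewrite H W0' => /esym /eqP; rewrite scaler_eq0 (negbTE Hw) orbF => /eqP.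
Qed.

Lemma pencil (a b : 'M[C]_4) (p : vec) : null_line a b -> p != 0 -> onN a b (wedge p (J p)) ->
  exists (x y : vec) (m1 m2 : C),
  [/\ x = m1 *: p + m2 *: J p, m1 * m1^* + m2 * m2^* != 0, indep4 x (J x) y (J y),
      wedge x (J x) = (m1 * m1^* + m2 * m2^*) *: wedge p (J p) &
      forall g, (exists s t, g = s *: a + t *: b) <-> (exists s t, g = wedge x (s *: J x + t *: y))].
Proof.
move=> Hn Hp [Hpinz [x0 [y0 Hpi]]].
set pi := wedge p (J p) in Hpinz Hpi *.
have [c [Sc Pc Bc Ic Ec]] := step1' Hn Hpi Hpinz.
have Hc : c != 0.
  apply/eqP => Hc0; have [_ H1] : (0:C) = 0 /\ (1:C) = 0.
    by apply: Ic; rewrite Hc0 scale0r scaler0 addr0.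
  by move/eqP: H1; rewrite oner_eq0.
have [u [w Huw]] := decomp Sc Pc Hc.
have Wnz : wedge u w != 0 by rewrite -Huw.
have Bc' := Bc; rewrite Huw /pi in Bc'.
have [m1 [m2 [m3 [m4 [Hm Hrel]]]]] := kern4 Bc'.
set x := m1 *: p + m2 *: J p.
have H34 : (m1 == 0) && (m2 == 0) -> (m3 == 0) && (m4 == 0) -> False.
  by move=> /andP [/eqP h1 /eqP h2] /andP [/eqP h3 /eqP h4]; move: Hm; rewrite h1 h2 h3 h4 eqxx.
have Hx : x != 0.
  apply/eqP => Hx0; have [h1 h2] := I1 Hp Hx0.
  rewrite h1 h2 !scale0r !add0r in Hrel.
  have [h3 h4] := wedge_ind Wnz Hrel.
  by apply: H34; rewrite ?h1 ?h2 ?h3 ?h4 eqxx.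
have Hnn : m1 * m1^* + m2 * m2^* != 0.
  apply: N0'; case: (boolP ((m1 != 0) || (m2 != 0))) => // /norP [/negPn /eqP h1 /negPn /eqP h2].
  by move/eqP: Hx; rewrite /x h1 h2 !scale0r addr0.
have Hxrel : x = - (m3 *: u + m4 *: w).
  by apply/eqP; rewrite -addr_eq0 /x !addrA Hrel.
have [y Hy] : exists y, c = wedge x y.
  have [H3|H3] := eqVneq m3 0.
    have H4 : m4 != 0.
      apply: contra Hx => H4; rewrite Hxrel H3 (eqP H4) !scale0r addr0 oppr0 //.
    exists (m4^-1 *: u); rewrite Huw Hxrel H3; apply/matrixP=> ? ?; rewrite !(wedgeE, mxE).
    by field.
  exists ((- m3^-1) *: w); rewrite Huw Hxrel; apply/matrixP=> ? ?; rewrite !(wedgeE, mxE).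
  by field.
have Hwx : wedge x (J x) = (m1 * m1^* + m2 * m2^*) *: pi.
  rewrite /x /pi JvD !JvZ JvK; apply/matrixP=> ? ?; rewrite !(wedgeE, mxE); ring.
exists x, y, m1, m2; split => //.
- move=> n1 n2 n3 n4 Hc4.
  case: (boolP [&& n1 == 0, n2 == 0, n3 == 0 & n4 == 0]).
    by case/and4P => /eqP -> /eqP -> /eqP -> /eqP ->.
  move=> Hnz; have [al [be Hyx]] := I2 Hx Hnz Hc4.
  have [_ H1] : (be * (m1 * m1^* + m2 * m2^*)) = 0 /\ (-1 : C) = 0.
    apply: Ic; rewrite Hy Hyx wedgeDr !wedgeZr wedgevv scaler0 add0r Hwx; vring.
  by move/eqP: H1; rewrite oppr_eq0 oner_eq0.
- move=> g; rewrite Ec; split=> [[s [t ->]]|[s [t ->]]].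
    exists (s / (m1 * m1^* + m2 * m2^*)), t.
    rewrite wedgeDr !wedgeZr Hwx -Hy scalerA mulfVK //.
  exists (s * (m1 * m1^* + m2 * m2^*)), t.
  by rewrite wedgeDr !wedgeZr Hwx -Hy scalerA.
Qed.

End F.

Section G.
Variable C : numClosedFieldType.
Local Notation vec := 'cV[C]_4.
Local Notation J := (@Jv C).
Variables (p x y : vec) (m1 m2 : C).
Hypothesis Hp : p != 0.
Hypothesis Hx : x = m1 *: p + m2 *: J p.
Hypothesis Hn : m1 * m1^* + m2 * m2^* != 0.
Hypothesis Hind : indep4 x (J x) y (J y).
Set Default Proof Using "All".

Lemma xnz : x != 0.
Proof.
apply/eqP => H0; rewrite Hx in H0; have [h1 h2] := I1 Hp H0.
by move: Hn; rewrite h1 h2 !mul0r addr0 eqxx.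
Qed.

Lemma Jx_eq : J x = m1^* *: J p - m2^* *: p.
Proof. by rewrite Hx JvD !JvZ JvK scalerN. Qed.

Lemma hline_span u : hline p u <-> exists a b, u = a *: x + b *: J x.
Proof.
split.
  move=> [q ->]; rewrite rmulE.
  exists ((q.1 * m1^* + q.2^* * m2^*) / (m1 * m1^* + m2 * m2^*)).
  exists ((q.2^* * m1 - q.1 * m2) / (m1 * m1^* + m2 * m2^*)).
  rewrite Jx_eq Hx; apply/matrixP=> ? ?; rewrite !mxE; field; exact: Hn.
move=> [a [b ->]]; exists (a * m1 - b * m2^*, (a * m2 + b * m1^*)^*).
rewrite rmulE conjCK /= Jx_eq Hx; vring.
Qed.

Lemma span_rmul w q : (exists a b, w = a *: x + b *: J x) -> exists a b, rmul w q = a *: x + b *: J x.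
Proof.
move=> [a [b ->]]; exists (q.1 * a - q.2^* * b^*), (q.1 * b + q.2^* * a^*).
rewrite rmulE JvD !JvZ JvK; vring.
Qed.

Lemma through_of (S : 'M[C]_4) : S *m x = 'i *: x -> S *m J x = - 'i *: J x -> through S p.
Proof.
move=> H1 H2 u; rewrite hline_span; split.
  move=> [a [b ->]]; exists ((- 'i * a) *: x + ('i * b) *: J x); split.
    by apply/hline_span; do 2 eexists.
  rewrite mulmxDr -!scalemxAr H1 H2 !scalerA.
  have ii : 'i * 'i = -1 :> C by rewrite -expr2 sqrCi.
  rewrite (_ : - 'i * a * 'i = - ('i * 'i) * a); last by ring.
  rewrite (_ : 'i * b * - 'i = - ('i * 'i) * b); last by ring.
  by rewrite ii opprK !mul1r.
move=> [v [/hline_span [a [b ->]] ->]].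
exists ('i * a), (- 'i * b); rewrite mulmxDr -!scalemxAr H1 H2 !scalerA; congr (_ + _); congr (_ *: _); ring.
Qed.

Lemma z_ind (s t : C) : t != 0 -> indep4 x (J x) (s *: J x + t *: y) (J (s *: J x + t *: y)).
Proof.
move=> Ht n1 n2 n3 n4; rewrite JvD !JvZ JvK => H.
have [h1 h2 h3 h4] : [/\ n1 - n4 * s^* = 0, n2 + n3 * s = 0, n3 * t = 0 & n4 * t^* = 0].
  by apply: Hind; rewrite -H; vring.
have e3 : n3 = 0 by move/eqP: h3; rewrite mulf_eq0 (negbTE Ht) orbF => /eqP.
have e4 : n4 = 0 by move/eqP: h4; rewrite mulf_eq0 conjC_eq0 (negbTE Ht) orbF => /eqP.
by move: h1 h2; rewrite e3 e4 !mul0r subr0 addr0.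
Qed.


Lemma rmul_qi (u : vec) : rmul u (qi C) = 'i *: u.
Proof. by rewrite rmulE /= conjC0 scale0r addr0. Qed.

Lemma realstr_wedge (v w : vec) : realstr (wedge v w) = wedge (J v) (J w).
Proof.
rewrite /realstr /wedge /Jv map_mxB !map_mxM -!map_trmx !trmx_mul mulmxBr mulmxBl.
by rewrite !mulmxA.
Qed.

Lemma realstrZ (c : C) M : realstr (c *: M) = c^* *: realstr M.
Proof. by rewrite /realstr map_mxZ -scalemxAr -scalemxAl. Qed.

Lemma real_t0 (s : C) : wedge x (s *: J x + 0 *: y) != 0 -> is_real_pt (wedge x (s *: J x + 0 *: y)).
Proof.
rewrite scale0r addr0 wedgeZr => Hnz.
have Hs : s != 0 by apply: contra Hnz => /eqP ->; rewrite scale0r.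
have HW : wedge x (J x) != 0 by apply: contra Hnz => /eqP ->; rewrite scaler0.
have HR : realstr (s *: wedge x (J x)) = s^* *: wedge x (J x).
  by rewrite realstrZ realstr_wedge JvK wedgeNr wedgeC opprK.
split; first by rewrite HR scaler_eq0 negb_or conjC_eq0 Hs HW.
exists (s^* / s); split; first by rewrite mulf_eq0 negb_or conjC_eq0 Hs invr_eq0 Hs.
by rewrite HR scalerA mulfVK.
Qed.

Lemma nonreal_t (s t : C) : wedge x (s *: J x + t *: y) != 0 ->
  ~ is_real_pt (wedge x (s *: J x + t *: y)) -> t != 0.
Proof.
move=> Hnz Hr; apply/negP => /eqP Ht; rewrite Ht in Hnz Hr; exact: Hr (real_t0 Hnz).
Qed.

Lemma sph_unique z (S : 'M[C]_4) : indep4 x (J x) z (J z) -> sphere S ->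
  twlift S (wedge x z) -> S = Sph x z.
Proof.
move=> Hi [Hl _] [v [w [_ Heig [Hgnz [k [Hk Hg]]]]]].
have E1 : wedge x z = wedge (k *: v) w by rewrite wedgeZl.
have [a [b Ex]] := span_wedge E1 Hgnz.
have E2 : wedge z x = wedge w (k *: v) by rewrite (wedgeC x z) Hg wedgeZr (wedgeC v w) scalerN.
have Hgnz' : wedge z x != 0 by rewrite wedgeC oppr_eq0.
have [a' [b' Ez]] := span_wedge E2 Hgnz'.
apply: Sph_unique => //; rewrite -rmul_qi; apply/Heig.
  by exists (a * k), b; rewrite Ex scalerA.
by exists (b' * k), a'; rewrite Ez scalerA addrC.
Qed.


Lemma rmul_inj (q q' : quat C) : rmul p q = rmul p q' -> q = q'.
Proof.
rewrite !rmulE => H.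
have [h1 h2] : q.1 - q'.1 = 0 /\ q.2^* - q'.2^* = 0.
  apply: (I1 Hp); rewrite (_ : _ + _ = (q.1 *: p + q.2^* *: J p) - (q'.1 *: p + q'.2^* *: J p)).
    by rewrite H subrr.
  by vring.
case: q q' h1 h2 H => [a b] [a' b'] /= /eqP; rewrite subr_eq0 => /eqP -> /eqP.
rewrite subr_eq0 => /eqP H2 _; congr pair.
by rewrite -[b]conjCK H2 conjCK.
Qed.

Lemma hbasis_z z : indep4 x (J x) z (J z) -> hbasis p z.
Proof.
move=> Hi u; have [c0 [c1 [c2 [c3 Hu]]]] := comb_ex u Hi.
have [q1 Hq1] : hline p (c0 *: x + c1 *: J x) by apply/hline_span; do 2 eexists.
exists (q1, (c2, c3^*)); split.
  by rewrite /= -Hq1 rmulE conjCK Hu /comb /=; vring.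
move=> [q1' q2'] /= Heq.
have [a' [b' Ha']] : exists a b, rmul p q1' = a *: x + b *: J x.
  by apply/hline_span; exists q1'.
have : comb x z c0 c1 c2 c3 = comb x z a' b' q2'.1 q2'.2^*.
  by rewrite -Hu Heq Ha' rmulE /comb; vring.
move/(comb_inj Hi) => [e0 e1 e2 e3].
congr pair.
  by apply: rmul_inj; rewrite -Hq1 Ha' e0 e1.
by case: q2' e2 e3 {Heq} => [a b] /= -> ->; rewrite conjCK.
Qed.

Lemma p_span : exists a b : C, p = a *: x + b *: J x.
Proof. by apply/hline_span; exists (1, 0); rewrite rmulE /= conjC0 scale0r addr0 scale1r. Qed.

Lemma touch_lem (s t s' t' : C) : t != 0 -> t' != 0 ->
  touches (Sph x (s *: J x + t *: y)) (Sph x (s' *: J x + t' *: y)) p.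
Proof.
move=> Ht Ht'.
set z := s *: J x + t *: y; set z' := s' *: J x + t' *: y.
have Hi : indep4 x (J x) z (J z) by exact: z_ind.
have Hi' : indep4 x (J x) z' (J z') by exact: z_ind.
exists z; split; first exact: hbasis_z.
have [a [b Hpab]] := p_span.
have Pc : forall w, p = comb x w a b 0 0 by move=> w; rewrite /comb Hpab !scale0r !addr0.
have [R HR] : hline p (('i * a) *: x + (- 'i * b) *: J x) by apply/hline_span; do 2 eexists.
pose de := s - t * s' / t'.
have Zc : z = comb x z' 0 de (t / t') 0.
  rewrite /comb /z /z' /de; apply/matrixP=> ? ?; rewrite !mxE; field; exact: Ht'.
have [H' HH'] : hline p ((- 'i * de - 'i * de) *: J x) by apply/hline_span; exists 0; eexists; rewrite scale0r add0r.
exists R, (qi C), (0, 0), H'; split.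
- by rewrite -HR {1}(Pc z) Sph_comb // /comb !mulr0 !scale0r !addr0.
- rewrite rmul_qi (_ : rmul p (0, 0) = 0); last by rewrite rmulE /= conjC0 !scale0r addr0.
  rewrite add0r -rmul_qi; apply/Sph_eig => //; exists 0, 1; by rewrite scale0r add0r scale1r.
- by rewrite -HR {1}(Pc z') Sph_comb // /comb !mulr0 !scale0r !addr0.
- rewrite rmul_qi -HH' {1}Zc Sph_comb // Zc /comb; apply/matrixP=> ? ?; rewrite !mxE; ring.
Qed.


Lemma rmul_add (u v : vec) q : rmul (u + v) q = rmul u q + rmul v q.
Proof. rewrite !rmulE JvD; vring. Qed.
Lemma rmul_sub (u v : vec) q : rmul (u - v) q = rmul u q - rmul v q.
Proof. rewrite !rmulE JvB; vring. Qed.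

Lemma hl_sum (S : 'M[C]_4) (u v : vec) q q' : hlinear S ->
  S *m (rmul u q + rmul v q') = rmul (S *m u) q + rmul (S *m v) q'.
Proof. by move=> Hl; rewrite (mulmxDr S (rmul u q)) !Hl. Qed.

Lemma touch_conv (s t : C) (S' : 'M[C]_4) : t != 0 -> sphere S' ->
  touches (Sph x (s *: J x + t *: y)) S' p ->
  exists s' t', t' != 0 /\ S' = Sph x (s' *: J x + t' *: y).
Proof.
move=> Ht [Hl' HS2] [e [Hb [R [N [H [H' [E1 E2 E3 E4]]]]]]].
set z := s *: J x + t *: y in E1 E2 E3 E4 *.
have Hi : indep4 x (J x) z (J z) by exact: z_ind.
set S := Sph x z in E1 E2 E3 E4 *.
have [Hl _] : sphere S by exact: Sph_sphere.
have ii : 'i * 'i = -1 :> C by rewrite -expr2 sqrCi.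
have Sp : S' *m p = S *m p by rewrite E3 E1.
have SJp : S' *m J p = S *m J p by rewrite !hlinJ // Sp.
have Sx : S' *m x = S *m x by rewrite Hx !mulmxDr -!scalemxAr Sp SJp.
have SJx : S' *m J x = S *m J x by rewrite !hlinJ // Sx.
have Sxi : S *m x = 'i *: x.
  by rewrite -rmul_qi; apply/Sph_eig => //; exists 1, 0; rewrite scale1r scale0r addr0.
have SJxi : S *m J x = - 'i *: J x by rewrite hlinJ // Sxi JvZ conjCi.
have Szi : S *m z = 'i *: z.
  by rewrite -rmul_qi; apply/Sph_eig => //; exists 0, 1; rewrite scale0r add0r scale1r.
have [[q1 q2] [Hz _]] := Hb z; rewrite /= in Hz.
have [a1 [b1 h1]] : exists a b, rmul p H' = a *: x + b *: J x by apply/hline_span; exists H'.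
have [a2 [b2 h2]] : exists a b, rmul p H = a *: x + b *: J x by apply/hline_span; exists H.
have [a3 [b3 h3]] := span_rmul q2 (ex_intro _ (a1 - a2) (ex_intro _ (b1 - b2) (erefl ((a1 - a2) *: x + (b1 - b2) *: J x)))).
have Se : S' *m e = S *m e + ((a1 - a2) *: x + (b1 - b2) *: J x).
  rewrite E4 E2 (_ : (a1 - a2) *: x + (b1 - b2) *: J x = rmul p H' - rmul p H); last by rewrite h1 h2; vring.
  by vring.
have [ga [ka Hz']] : exists ga ka, S' *m z = 'i *: z + ga *: x + ka *: J x.
  exists a3, b3; rewrite -Szi {1 2}Hz !hl_sum // Sp Se rmul_add h3; vring.
have HSS := congr1 (fun M => M *m z) HS2; rewrite /= -mulmxA Hz' mulNmx mul1mx in HSS.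
rewrite !mulmxDr -!scalemxAr Hz' Sx SJx Sxi SJxi in HSS.
rewrite (_ : - z = ('i * 'i) *: z) in HSS; last by rewrite ii scaleN1r.
have Hga : ga = 0.
  have E : (2%:R * 'i * ga) *: x = 0.
    rewrite -(subrr (('i * 'i) *: z)) -{1}HSS; vring.
  move/eqP: E; rewrite scaler_eq0 (negbTE xnz) orbF !mulf_eq0 pnatr_eq0 /=.
  by rewrite -normr_eq0 normCi oner_eq0 /= => /eqP.
pose be := - 'i * ka / 2%:R.
exists (s + be), t; split => //.
have Hi' : indep4 x (J x) ((s + be) *: J x + t *: y) (J ((s + be) *: J x + t *: y)) by exact: z_ind.
apply: Sph_unique => //; first by rewrite Sx.
rewrite (_ : (s + be) *: J x + t *: y = z + be *: J x); last by rewrite /z; vring.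
rewrite mulmxDr -scalemxAr Hz' Hga SJx SJxi scale0r addr0.
apply/subr0_eq; rewrite (_ : _ - _ = (('i * 'i + 1) * ka) *: J x).
  by rewrite ii addNr mul0r scale0r.
rewrite /be /z; apply/matrixP=> ? ?; rewrite !mxE; by field.
Qed.

End G.

Unset Implicit Arguments.

Theorem mainTheorem10 (C : numClosedFieldType) (a b : 'M[C]_4) (p : 'cV[C]_4) :
  null_line a b -> p != 0 -> onN a b (wedge p (Jv p)) ->
  [/\ (forall g, onN a b g -> ~ is_real_pt g ->
         (exists S, sphere S /\ twlift S g) /\
         (forall S, sphere S -> twlift S g -> through S p)),
      (forall g g' S S', onN a b g -> ~ is_real_pt g -> onN a b g' -> ~ is_real_pt g' ->
         sphere S -> twlift S g -> sphere S' -> twlift S' g' -> touches S S' p)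
    & (forall g S, onN a b g -> ~ is_real_pt g -> sphere S -> twlift S g ->
         (forall S', sphere S' -> touches S S' p -> exists g', onN a b g' /\ twlift S' g') /\
         (forall g', onN a b g' ->
            proj_eq g' (wedge p (Jv p)) \/ exists S', [/\ sphere S', touches S S' p & twlift S' g']))].
Proof.
move=> Hnl Hp Hon.
have [x [y [m1 [m2 [Hx Hn Hind Hwx Hspan]]]]] := pencil Hnl Hp Hon.
have Gk : forall s t : C, t != 0 -> indep4 x (Jv x) (s *: Jv x + t *: y) (Jv (s *: Jv x + t *: y)).
  by move=> s t Ht; exact: (z_ind Hp Hx Hn Hind).
have onN_iff : forall g, onN a b g <-> g != 0 /\ exists s t : C, g = wedge x (s *: Jv x + t *: y).
  by move=> g; split => [[Hg /Hspan H] | [Hg /Hspan H]].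
have NR : forall g, onN a b g -> ~ is_real_pt g ->
    exists s t : C, t != 0 /\ g = wedge x (s *: Jv x + t *: y).
  move=> g /onN_iff [Hg [s [t Eg]]] Hr; exists s, t; split => //.
  by apply: (@nonreal_t _ _ _ _ _ _ Hp Hx Hn Hind s); rewrite -Eg.
have UN : forall g S, onN a b g -> ~ is_real_pt g -> sphere S -> twlift S g ->
    exists s t : C, t != 0 /\ S = Sph x (s *: Jv x + t *: y).
  move=> g S Hg Hr HS Ht; have [s [t [Ht0 Eg]]] := NR g Hg Hr.
  exists s, t; split => //; apply: (sph_unique Hp Hx Hn Hind) => //; first exact: Gk.
  by rewrite -Eg.
have onN_w : forall s t : C, t != 0 -> onN a b (wedge x (s *: Jv x + t *: y)).
  move=> s t Ht; apply/onN_iff; split; last by exists s, t.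
  exact: (wedge_nz (indep_xz (Gk s t Ht))).
split.
- move=> g Hg Hr; split.
    have [s [t [Ht Eg]]] := NR g Hg Hr.
    exists (Sph x (s *: Jv x + t *: y)); split; first exact: Sph_sphere (Gk s t Ht).
    by rewrite Eg; exact: Sph_twlift (Gk s t Ht).
  move=> S HS Htw; have [s [t [Ht ->]]] := UN g S Hg Hr HS Htw.
  apply: (through_of Hp Hx Hn Hind); [exact: Sph_x (Gk s t Ht) | exact: Sph_Jx (Gk s t Ht)].
- move=> g g' S S' Hg Hr Hg' Hr' HS Htw HS' Htw'.
  have [s [t [Ht ->]]] := UN g S Hg Hr HS Htw.
  have [s' [t' [Ht' ->]]] := UN g' S' Hg' Hr' HS' Htw'.
  exact: (touch_lem Hp Hx Hn Hind).
- move=> g S Hg Hr HS Htw; have [s [t [Ht ES]]] := UN g S Hg Hr HS Htw; split.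
    move=> S' HS' Htch; rewrite ES in Htch.
    have [s' [t' [Ht' ->]]] := touch_conv Hp Hx Hn Hind Ht HS' Htch.
    exists (wedge x (s' *: Jv x + t' *: y)); split; first exact: onN_w.
    exact: Sph_twlift (Gk s' t' Ht').
  move=> g' /onN_iff [Hg' [s' [t' Eg']]].
  have [Ht'|Ht'] := eqVneq t' 0.
    have E : g' = (s' * (m1 * m1^* + m2 * m2^*)) *: wedge p (Jv p).
      by rewrite Eg' Ht' scale0r addr0 wedgeZr Hwx scalerA.
    left; split => //; exists (s' * (m1 * m1^* + m2 * m2^*)); split => //.
    by apply: contra Hg' => /eqP H0; rewrite E H0 scale0r.
  right; exists (Sph x (s' *: Jv x + t' *: y)); split.
  + exact: Sph_sphere (Gk s' t' Ht').
  + by rewrite ES; exact: (touch_lem Hp Hx Hn Hind).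
  + by rewrite Eg'; exact: Sph_twlift (Gk s' t' Ht').
Qed.
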